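(* Let $\alpha>0$ and $\beta\le\alpha$. Then the Sharma-Mittal entropy $S_{\alpha,\beta}$ is supermodular on the majorization lattice: for all $\mathbf{p},\mathbf{q}\in\mathcal{P}_n$, $$S_{\alpha,\beta}(\mathbf{p})+S_{\alpha,\beta}(\mathbf{q})\le S_{\alpha,\beta}(\mathbf{p}\wedge\mathbf{q})+S_{\alpha,\beta}(\mathbf{p}\vee\mathbf{q}).$$
   Context: $\mathcal{P}_n=\{\mathbf{p}=(p_1,\dots,p_n): p_i\ge0,\ \sum_i p_i=1\}$, with all vectors taken with components in non-increasing order. Majorization: $\mathbf{p}\preceq\mathbf{q}$ iff $\sum_{i=1}^k p_i\le\sum_{i=1}^k q_i$ for $k=1,\dots,n$; $(\mathcal{P}_n,\preceq)$ is a lattice. Its greatest lower bound $\mathbf{p}\wedge\mathbf{q}=\mathbf{r}$ satisfies $\sum_{i=1}^k r_i=\min\{\sum_{i=1}^k p_i,\sum_{i=1}^k q_i\}$. Its least upper bound $\mathbf{p}\vee\mathbf{q}$ is the least element of $\mathcal{P}_n$ (w.r.t. $\preceq$) majorizing both; concretely, let $\mathbf{w}$ satisfy $\sum_{i=1}^k w_i=\max\{\sum_{i=1}^k p_i,\sum_{i=1}^k q_i\}$; if $\mathbf{w}$ is non-increasing then $\mathbf{p}\vee\mathbf{q}=\mathbf{w}$, otherwise $\mathbf{p}\vee\mathbf{q}$ is obtained by repeatedly replacing each maximal consecutive block of coordinates violating the non-increasing order by its average until the vector is non-increasing. The Sharma-Mittal entropy is $S_{\alpha,\beta}(\mathbf{p})=\frac{1}{1-\beta}\left[\left(\sum_{i=1}^n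 p_i^\alpha\right)^{\frac{1-\beta}{1-\alpha}}-1\right]$, with values at $\alpha=1$ and/or $\beta=1$ defined by the corresponding limits. *)

(* Defs.v *)
From mathcomp Require Import all_boot all_order all_algebra.
From mathcomp Require Import reals sequences exp.
Set Implicit Arguments. Unset Strict Implicit. Unset Printing Implicit Defensive.
Import Order.TTheory GRing.Theory Num.Theory.
Local Open Scope ring_scope.

Section SM.
Variables (R : realType) (n : nat).

Definition prob_vec (p : 'I_n -> R) : Prop :=
  (forall i, 0 <= p i) /\ (\sum_(i < n) p i = 1) /\
  (forall i j : 'I_n, (i <= j)%N -> p j <= p i).

Definition psum (p : 'I_n -> R) (k : nat) : R := \sum_(i < n | (i < k)%N) p i.

Definition majorized (p q : 'I_n -> R) : Prop :=
  forall k : nat, (1 <= k <= n)%N -> psum p k <= psum q k.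

Definition is_meet (p q r : 'I_n -> R) : Prop :=
  prob_vec r /\ majorized r p /\ majorized r q /\
  (forall s, prob_vec s -> majorized s p -> majorized s q -> majorized s r).

Definition is_join (p q w : 'I_n -> R) : Prop :=
  prob_vec w /\ majorized p w /\ majorized q w /\
  (forall s, prob_vec s -> majorized p s -> majorized q s -> majorized w s).

(* Shannon entropy, with 0 ln 0 = 0 (ln 0 = 0 in mathcomp-analysis) *)
Definition shannon (p : 'I_n -> R) : R := - \sum_(i < n) p i * ln (p i).

(* sum_i p_i^alpha (0^alpha = 0 for alpha <> 0) *)
Definition powsum (a : R) (p : 'I_n -> R) : R := \sum_(i < n) p i `^ a.

(* Sharma-Mittal entropy, limiting cases alpha = 1 and/or beta = 1 written
   as their (standard) closed-form limits *)
Definition sharma_mittal (a b : R) (p : 'I_n -> R) : R :=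
  if a == 1 then
    (if b == 1 then shannon p
     else (expR ((1 - b) * shannon p) - 1) / (1 - b))
  else
    (if b == 1 then ln (powsum a p) / (1 - a)
     else ((powsum a p) `^ ((1 - b) / (1 - a)) - 1) / (1 - b)).

End SM.

(* Main.v *)
Require Import Defs.
From mathcomp Require Import all_boot all_order all_algebra.
From mathcomp Require Import reals sequences exp.
From mathcomp Require Import lra ring zify.
Import Order.TTheory GRing.Theory Num.Theory.
Local Open Scope ring_scope.

Section Tan.
Variable R : realType.
Implicit Types x y z g L : R.

Lemma expR_tan z z0 : expR z0 * (1 + (z - z0)) <= expR z.
Proof.
have -> : expR z = expR z0 * expR (z - z0) by rewrite -expRD addrC subrK.
by rewrite ler_wpM2l ?expR_ge0 // expR_ge1Dx.
Qed.

Lemma KB g L : 0 <= g -> g <= 1 -> expR (g * L) <= 1 + g * (expR L - 1).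
Proof.
move=> g0 g1.
have t1 := expR_tan L (g * L).
have t2 := expR_tan 0 (g * L); rewrite expR0 in t2.
have h1 := ler_wpM2l g0 t1.
have g1' : 0 <= 1 - g by lra.
have h2 := ler_wpM2l g1' t2.
lra.
Qed.

Lemma CB g L : 1 <= g \/ g <= 0 -> 1 + g * (expR L - 1) <= expR (g * L).
Proof.
case=> hg.
- have gi0 : 0 <= g^-1 by rewrite invr_ge0; lra.
  have gi1 : g^-1 <= 1 by rewrite invf_le1; lra.
  have := @KB (g^-1) (g * L) gi0 gi1.
  rewrite mulrA mulVf ?mul1r; last by apply/eqP => h; lra.
  move=> h; have := ler_wpM2l (ltW (lt_le_trans ltr01 hg)) h.
  rewrite mulrDr mulrA divff; last by apply/eqP => h'; lra.
  lra.
- have e1 := expR_ge1Dx (g * L).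
  have e2 := expR_ge1Dx L.
  have : g * (expR L - 1 - L) <= 0 by apply: mulr_le0_ge0 => //; lra.
  lra.
Qed.

Lemma pow_split x y g : 0 < x -> 0 < y ->
  y = x * expR (ln y - ln x) /\ y `^ g = x `^ g * expR (g * (ln y - ln x)).
Proof.
move=> x0 y0; split.
  by rewrite -{1}(lnK x0) -expRD addrC subrK lnK.
rewrite /powR !gt_eqF // -expRD; congr expR; ring.
Qed.

Lemma pow_tan_ge x y g : 0 < x -> 0 < y -> 1 <= g \/ g <= 0 ->
  x `^ g + g * (x `^ g / x) * (y - x) <= y `^ g.
Proof.
move=> x0 y0 hg; have [hy hyg] := pow_split _ _ g x0 y0.
have -> : x `^ g + g * (x `^ g / x) * (y - x) =
  x `^ g * (1 + g * (expR (ln y - ln x) - 1)).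
  rewrite {1}hy; field; apply/eqP => h; lra.
by rewrite hyg ler_wpM2l ?powR_ge0 // CB.
Qed.

Lemma pow_tan_le x y g : 0 < x -> 0 < y -> 0 <= g -> g <= 1 ->
  y `^ g <= x `^ g + g * (x `^ g / x) * (y - x).
Proof.
move=> x0 y0 g0 g1; have [hy hyg] := pow_split _ _ g x0 y0.
have -> : x `^ g + g * (x `^ g / x) * (y - x) =
  x `^ g * (1 + g * (expR (ln y - ln x) - 1)).
  rewrite {1}hy; field; apply/eqP => h; lra.
by rewrite hyg ler_wpM2l ?powR_ge0 // KB.
Qed.

Definition tangent (phi c : R -> R) :=
  forall s t, 0 < s -> 0 <= t -> phi t <= phi s + c s * (t - s).

Lemma tan_powlt a : 0 < a -> a <= 1 ->
  tangent (fun t => t `^ a) (fun s => a * (s `^ a / s)).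
Proof.
move=> a0 a1 s t s0; rewrite le_eqVlt => /predU1P[<-|t0].
  rewrite powR0 ?gt_eqF //.
  have -> : a * (s `^ a / s) * (0 - s) = - (a * s `^ a) by field; apply/eqP=> h; lra.
  have := powR_ge0 s a; nra.
rewrite /=; apply: pow_tan_le => //; lra.
Qed.

Lemma tan_powgt a : 1 <= a ->
  tangent (fun t => - t `^ a) (fun s => - (a * (s `^ a / s))).
Proof.
move=> a1 s t s0; rewrite le_eqVlt => /predU1P[<-|t0].
  rewrite powR0 ?gt_eqF //; last lra.
  have -> : - (a * (s `^ a / s)) * (0 - s) = a * s `^ a by field; apply/eqP=> h; lra.
  have := powR_ge0 s a; nra.
have := pow_tan_ge _ _ _ s0 t0 (or_introl a1); lra.
Qed.

Lemma tan_shannon : tangent (fun t => - (t * ln t)) (fun s => - ln s - 1).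
Proof.
move=> s t s0; rewrite le_eqVlt => /predU1P[<-|t0].
  rewrite mul0r oppr0; lra.
have [hs _] := pow_split _ _ 1 t0 s0.
have e := expR_ge1Dx (ln s - ln t).
have : 0 <= t * (expR (ln s - ln t) - 1 - (ln s - ln t)) by apply: mulr_ge0; lra.
lra.
Qed.

End Tan.
Arguments tangent {R}.

Set Implicit Arguments. Unset Strict Implicit.

Section Comb.
Variable R : realType.
Implicit Types (f x y d c : nat -> R) (phi cc : R -> R).

Definition PS f k : R := \sum_(i < k) f i.

Lemma PS0 f : PS f 0 = 0.
Proof. by rewrite /PS big_ord0. Qed.

Lemma PSS f k : PS f k.+1 = PS f k + f k.
Proof. by rewrite /PS big_ord_recr. Qed.

Lemma PS_ext f g k : (forall i, (i < k)%N -> f i = g i) -> PS f k = PS g k.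
Proof. by move=> h; apply: eq_bigr => i _; apply: h. Qed.

Lemma PS_tele f k : PS (fun i => f i.+1 - f i) k = f k - f 0.
Proof. elim: k => [|k IH]; rewrite ?PS0 ?subrr // PSS IH; ring. Qed.

Lemma PS_mono f N k j : (forall i, (i < N)%N -> 0 <= f i) ->
  (k <= j)%N -> (j <= N)%N -> PS f k <= PS f j.
Proof.
move=> f0 hkj hjN; elim: j hkj hjN => [|j IH] hkj hjN.
  by move: hkj; rewrite leqn0 => /eqP ->.
move: hkj; rewrite leq_eqVlt => /orP[/eqP ->//|hkj].
rewrite PSS; have := IH hkj (ltnW hjN); have := f0 j hjN; lra.
Qed.

Lemma abel c d M : \sum_(i < M.+1) c i * d i =
  c M * PS d M.+1 + \sum_(i < M) PS d i.+1 * (c i - c i.+1).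
Proof.
elim: M => [|M IH]; first by rewrite big_ord1 big_ord0 /PS big_ord1 addr0.
rewrite big_ord_recr /= IH [in RHS]big_ord_recr /= !PSS; ring.
Qed.

Lemma c_mono phi cc s t : tangent phi cc -> 0 < s -> s <= t -> cc t <= cc s.
Proof.
move=> ht s0 st; have t0 : 0 < t by lra.
have h1 := ht s t s0 (ltW t0); have h2 := ht t s t0 (ltW s0).
have : 0 <= (cc s - cc t) * (t - s) by lra.
rewrite le_eqVlt in st; case/orP: st => [/eqP -> | st]; first lra.
rewrite pmulr_lge0; lra.
Qed.

Lemma key phi cc N x y : tangent phi cc ->
  (forall i, (i < N)%N -> 0 <= y i) -> (forall i, (i < N)%N -> 0 <= x i) ->
  (forall i, (i < N)%N -> x i = 0 -> y i = 0) ->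
  PS y N = PS x N ->
  (forall k, (k.+1 < N)%N -> (PS y k.+1 - PS x k.+1) * (cc (x k) - cc (x k.+1)) <= 0) ->
  \sum_(i < N) phi (y i) <= \sum_(i < N) phi (x i).
Proof.
move=> ht y0 x0 xy hN hk.
apply: (@le_trans _ _ (\sum_(i < N) (phi (x i) + cc (x i) * (y i - x i)))).
  apply: ler_sum => i _.
  have := x0 i (ltn_ord i); rewrite le_eqVlt => /orP[/eqP h|h].
    by rewrite (xy i (ltn_ord i) (esym h)) -h subrr mulr0 addr0.
  by apply: ht => //; apply: y0.
rewrite big_split /= gerDl.
case: N y0 x0 xy hN hk => [|M] y0 x0 xy hN hk; first by rewrite big_ord0.
rewrite (abel (fun i => cc (x i)) (fun i => y i - x i)).
have -> : PS (fun i => y i - x i) M.+1 = 0 by rewrite /PS sumrB -/(PS y _) hN subrr.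
rewrite mulr0 add0r; apply: sumr_le0 => i _.
have -> : PS (fun i => y i - x i) i.+1 = PS y i.+1 - PS x i.+1 by rewrite /PS sumrB.
by apply: hk; rewrite ltnS.
Qed.

Definition sortedN N x := forall i j, (i <= j)%N -> (j < N)%N -> x j <= x i.

Lemma tailZ N x k : sortedN N x -> (forall i, (i < N)%N -> 0 <= x i) ->
  (k < N)%N -> x k = 0 -> PS x k = PS x N.
Proof.
move=> xs x0 kN xk.
suff : forall d : nat, (k + d <= N)%N -> PS x (k + d) = PS x k.
  move=> /(_ (N - k)%N); rewrite subnKC ?leqnn; [by move=> ->|exact: ltnW].
elim=> [|d IH] hd; first by rewrite addn0.
have hd2 : (k + d < N)%N by rewrite -addnS.
rewrite addnS PSS IH ?(ltnW hd2) //.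
have h1 := x0 _ hd2; have h2 := xs k (k + d)%N (leq_addr _ _) hd2; lra.
Qed.

Lemma schur phi cc N x y : tangent phi cc -> sortedN N x ->
  (forall i, (i < N)%N -> 0 <= x i) -> (forall i, (i < N)%N -> 0 <= y i) ->
  PS x N = 1 -> PS y N = 1 ->
  (forall k, (k <= N)%N -> PS x k <= PS y k) ->
  (forall k, (k <= N)%N -> PS y k <= 1) ->
  \sum_(i < N) phi (y i) <= \sum_(i < N) phi (x i).
Proof.
move=> ht xs x0 y0 x1 y1 hxy hy1.
apply: (key ht y0 x0) => [i iN xi||k kN].
- have := tailZ xs x0 iN xi; rewrite x1 => hx.
  have := hxy i (ltnW iN); have := hy1 i.+1 iN; rewrite PSS.
  have := y0 i iN; lra.
- by rewrite x1 y1.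
- have kN' : (k.+1 <= N)%N by apply: ltnW.
  have := x0 _ kN; rewrite le_eqVlt => /orP[/eqP h|h].
    have := tailZ xs x0 kN (esym h); rewrite x1 => hx.
    have := hxy _ kN'; have := hy1 _ kN'; rewrite hx => h1 h2.
    have -> : PS y k.+1 - 1 = 0 by lra.
    by rewrite mul0r.
  apply: mulr_ge0_le0; first by have := hxy _ kN'; lra.
  have : cc (x k) <= cc (x k.+1).
    apply: (c_mono ht h); apply: xs => //; exact: leqnSn.
  lra.
Qed.

Lemma joinl phi cc N x y : tangent phi cc -> sortedN N x ->
  (forall i, (i < N)%N -> 0 <= x i) -> (forall i, (i < N)%N -> 0 <= y i) ->
  PS x N = 1 -> PS y N = 1 ->
  (forall k, (k <= N)%N -> PS y k <= PS x k) ->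
  (forall k, (k.+1 < N)%N -> PS y k.+1 = PS x k.+1 \/ x k = x k.+1) ->
  \sum_(i < N) phi (y i) <= \sum_(i < N) phi (x i).
Proof.
move=> ht xs x0 y0 x1 y1 hyx ht2.
have claim : forall i, (i < N)%N -> x i = 0 -> PS y i = 1.
  elim=> [|i IH] iN xi.
    have := tailZ xs x0 iN xi; rewrite PS0 x1 => h; lra.
  have := tailZ xs x0 iN xi; rewrite x1 => hx.
  case: (ht2 i iN) => [->//|h].
  have := IH (ltnW iN) (etrans h xi) => hy.
  have := hyx _ (ltnW iN); rewrite hx PSS hy.
  have := y0 i (ltnW iN); lra.
apply: (key ht y0 x0) => [i iN xi||k kN].
- have hy := claim i iN xi.
  have hx := tailZ xs x0 iN xi; rewrite x1 in hx.
  have := hyx _ iN; rewrite !PSS hy hx xi.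
  have := y0 i iN; lra.
- by rewrite x1 y1.
- case: (ht2 k kN) => [->|->]; first by rewrite subrr mul0r.
  by rewrite subrr mulr0.
Qed.

Lemma termC phi cc lo hi a b : tangent phi cc -> 0 <= lo ->
  lo <= a -> a <= hi -> lo <= b -> b <= hi -> a + b = lo + hi ->
  phi lo + phi hi <= phi a + phi b.
Proof.
move=> ht.
wlog ab : a b / a <= b.
  move=> W lo0 h1 h2 h3 h4 h5; case: (leP a b) => hab; first by apply: (W a b).
  rewrite [phi a + _]addrC; apply: (W b a (ltW hab)) => //; by rewrite addrC.
move=> lo0 h1 h2 h3 h4 h5.
have := h1; rewrite le_eqVlt => /orP[/eqP e|lt].
  have -> : hi = b by lra.
  by rewrite e.
have a0 : 0 < a by lra.
have t1 := ht a lo a0 lo0.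
have t2 := ht b hi (lt_le_trans a0 ab) (le_trans (ltW a0) (le_trans ab h4)).
have cm := c_mono ht a0 ab.
have : (a - lo) * (cc b - cc a) <= 0 by apply: mulr_ge0_le0; lra.
have e : hi - b = a - lo by lra.
rewrite e in t2; lra.
Qed.

End Comb.


Section Bridge.
Variable R : realType.
Variable n' : nat.
Local Notation n := n'.+1.
Implicit Types f p q r w : 'I_n -> R.

Definition fn f : nat -> R := fun i => f (inord i).

Lemma sum_fn (g : R -> R) f : \sum_(i < n) g (f i) = \sum_(i < n) g (fn f i).
Proof. by apply: eq_bigr => i _; rewrite /fn inord_val. Qed.

Lemma sum_PS f : \sum_(i < n) f i = PS (fn f) n.
Proof. by rewrite /PS; apply: eq_bigr => i _; rewrite /fn inord_val. Qed.

Lemma psum_fn f k : (k <= n)%N -> psum f k = PS (fn f) k.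
Proof.
move=> hk; rewrite /PS (big_ord_widen n (fun i => fn f i) hk) /psum.
by apply: eq_bigr => i _; rewrite /fn inord_val.
Qed.

Lemma maj_PS a b : majorized a b -> forall k, (k <= n)%N -> PS (fn a) k <= PS (fn b) k.
Proof.
move=> h [|k] hk; first by rewrite !PS0.
by rewrite -!psum_fn //; apply: h.
Qed.

Lemma pv_facts f : prob_vec f ->
  [/\ sortedN n (fn f), (forall i, (i < n)%N -> 0 <= fn f i) & PS (fn f) n = 1].
Proof.
move=> [f0 [f1 fs]]; split.
- move=> i j hij hj; rewrite /fn; apply: fs; rewrite !inordK //; exact: leq_ltn_trans hj.
- by move=> i _; apply: f0.
- by rewrite -sum_PS.
Qed.

Lemma PS_le1 f : prob_vec f -> forall k, (k <= n)%N -> PS (fn f) k <= 1.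
Proof.
move=> /pv_facts [_ f0 f1] k hk; rewrite -f1; exact: PS_mono f0 hk (leqnn _).
Qed.

Definition mxr (a b : R) := if a <= b then b else a.
Definition mnr (a b : R) := if a <= b then a else b.

Lemma mxr_ge a b : a <= mxr a b /\ b <= mxr a b.
Proof. by rewrite /mxr; case: (leP a b) => h; lra. Qed.

Lemma mnr_le a b : mnr a b <= a /\ mnr a b <= b.
Proof. by rewrite /mnr; case: (leP a b) => h; lra. Qed.

Lemma cons_sorted N (x : nat -> R) : (forall i, (i.+1 < N)%N -> x i.+1 <= x i) -> sortedN N x.
Proof.
move=> h i j; elim: j => [|j IH] hij hj.
  by move: hij; rewrite leqn0 => /eqP ->.
move: hij; rewrite leq_eqVlt => /orP[/eqP ->//|hij].
apply: le_trans (h _ hj) (IH hij (ltnW hj)).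
Qed.

Lemma touching p q w : prob_vec w -> majorized p w -> majorized q w ->
  (forall s, prob_vec s -> majorized p s -> majorized q s -> majorized w s) ->
  forall k, (k.+1 < n)%N ->
  mxr (PS (fn p) k.+1) (PS (fn q) k.+1) = PS (fn w) k.+1 \/ fn w k = fn w k.+1.
Proof.
move=> pw mpw mqw wmin k hk.
have [ws w0 w1] := pv_facts pw.
have hMW : mxr (PS (fn p) k.+1) (PS (fn q) k.+1) <= PS (fn w) k.+1.
  rewrite /mxr; case: (leP (PS (fn p) k.+1) (PS (fn q) k.+1)) => _; [exact: (maj_PS mqw (ltnW hk))|exact: (maj_PS mpw (ltnW hk))].
have hws : fn w k.+1 <= fn w k by apply: ws => //; exact: leqnSn.
case: (eqVneq (mxr (PS (fn p) k.+1) (PS (fn q) k.+1)) (PS (fn w) k.+1)) => [->|hne];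
  first by left.
case: (eqVneq (fn w k) (fn w k.+1)) => [->|hne2]; first by right.
exfalso.
set Mk := mxr (PS (fn p) k.+1) (PS (fn q) k.+1) in hMW hne.
set W := PS (fn w) k.+1 in hMW hne.
have d1 : 0 < W - Mk by rewrite subr_gt0 lt_neqAle hne hMW.
have d2 : 0 < fn w k - fn w k.+1 by rewrite subr_gt0 lt_neqAle eq_sym hne2 hws.
pose e := if W - Mk <= (fn w k - fn w k.+1) / 2 then W - Mk else (fn w k - fn w k.+1) / 2.
have [e0 e1 e2] : [/\ 0 < e, e <= W - Mk & e <= (fn w k - fn w k.+1) / 2].
  by rewrite /e; case: (leP (W - Mk) ((fn w k - fn w k.+1) / 2)) => h; split; lra.
pose sn i := fn w i - (if i == k then e else 0) + (if i == k.+1 then e else 0).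
pose s : 'I_n -> R := fun i => sn i.
have fs : forall i, (i < n)%N -> fn s i = sn i by move=> i hi; rewrite /fn /s inordK.
have PSs : forall j, PS sn j = PS (fn w) j - (if j == k.+1 then e else 0).
  elim=> [|j IH]; first by rewrite !PS0 subr0.
  rewrite !PSS IH /sn eqSS; case: (j == k); case: (j == k.+1) => /=; lra.
have PSsn : forall j, (j <= n)%N -> PS (fn s) j = PS sn j.
  move=> j hj; apply: PS_ext => i hi; apply: fs; exact: leq_trans hi hj.
have sn0 : forall i, (i < n)%N -> 0 <= sn i.
  move=> i hi; rewrite /sn.
  have wk0 := w0 _ (ltnW hk); have wk1 := w0 _ hk; have wi := w0 _ hi.
  case: (eqVneq i k) => [->|h1].
    rewrite ?eqxx ?(ltn_eqF (ltnSn k)) /=; lra.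
  case: (eqVneq i k.+1) => [->|h2].
    rewrite ?eqxx ?(gtn_eqF (ltnSn k)) /=; lra.
  rewrite ?(negbTE h1) ?(negbTE h2) /=; lra.
have sns : sortedN n sn.
  apply: cons_sorted => i hi; rewrite /sn eqSS.
  have wi := ws i i.+1 (leqnSn _) hi.
  case: (eqVneq i k) => [->|h1].
    rewrite ?eqxx ?(gtn_eqF (ltnSn k)) ?(ltn_eqF (ltnSn k)) /=; lra.
  rewrite ?(negbTE h1).
  case: (eqVneq i.+1 k) => [hk1|h2].
    have -> : (i == k.+1) = false by rewrite -hk1; apply: ltn_eqF; exact: leqW (ltnSn i).
    lra.
  rewrite ?(negbTE h2).
  case: (eqVneq i k.+1) => [hik|h3].
    subst i; rewrite ?eqxx /=; have := ws k.+1 k.+2 (leqnSn _) hi; lra.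
  rewrite ?(negbTE h3) /=; lra.
have sp : prob_vec s.
  split; [|split].
  - by move=> i; apply: sn0.
  - rewrite sum_PS PSsn // PSs w1.
    have -> : (n == k.+1) = false by apply/negbTE/eqP; lia.
    by rewrite subr0.
  - move=> i j hij; rewrite /s; apply: sns => //.
have majs : forall a, majorized a w -> PS (fn a) k.+1 <= Mk -> majorized a s.
  move=> a maw haM j /andP[j1 jn]; rewrite !psum_fn // PSsn // PSs.
  case: (j =P k.+1) => [->|hj] /=; last first.
    by rewrite subr0 -!psum_fn //; apply: maw; rewrite j1 jn.
  rewrite -/W; lra.
have := wmin s sp (majs p mpw (mxr_ge _ _).1) (majs q mqw (mxr_ge _ _).2) k.+1.
rewrite !psum_fn ?(ltnW hk) // PSsn ?(ltnW hk) // PSs eqxx /= -/W.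
move=> /(_ isT); lra.
Qed.

End Bridge.


Section Inner.
Variable R : realType.
Variable n' : nat.
Local Notation n := n'.+1.
Implicit Types f p q r w : 'I_n -> R.

Lemma cross (P Q a b : R) : 0 <= a -> 0 <= b ->
  let u := mxr (P + a) (Q + b) - mxr P Q in
  let v := mnr (P + a) (Q + b) - mnr P Q in
  [/\ u + v = a + b, 0 <= u, 0 <= v,
      a <= b -> [/\ a <= u, u <= b, a <= v & v <= b] &
      b <= a -> [/\ b <= u, u <= a, b <= v & v <= a]].
Proof.
move=> a0 b0 u v; rewrite /u /v /mxr /mnr.
case: (leP (P + a) (Q + b)) => h1; case: (leP P Q) => h2; split;
  try lra; move=> h; split; lra.
Qed.

Lemma inner phi cc p q r w : tangent phi cc ->
  prob_vec p -> prob_vec q -> is_meet p q r -> is_join p q w ->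
  let G f := \sum_(i < n) phi (f i) in
  [/\ G p + G q <= G r + G w, G p <= G r, G q <= G r, G w <= G p & G w <= G q].
Proof.
move=> ht pp pq [pr [mrp [mrq _]]] [pw [mpw [mqw wmin]]] G.
rewrite /G (sum_fn phi p) (sum_fn phi q) (sum_fn phi r) (sum_fn phi w).
have [ps p0 p1] := pv_facts pp.
have [qs q0 q1] := pv_facts pq.
have [rs r0 r1] := pv_facts pr.
have [ws w0 w1] := pv_facts pw.
have hrp := maj_PS mrp; have hrq := maj_PS mrq.
have hpw := maj_PS mpw; have hqw := maj_PS mqw.
split.
- pose MX k := mxr (PS (fn p) k) (PS (fn q) k).
  pose MN k := mnr (PS (fn p) k) (PS (fn q) k).
  pose u i := MX i.+1 - MX i.
  pose v i := MN i.+1 - MN i.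
  have MX0 : MX 0%N = 0 by rewrite /MX !PS0 /mxr lexx.
  have MN0 : MN 0%N = 0 by rewrite /MN !PS0 /mnr lexx.
  have PSu : forall k, PS u k = MX k by move=> k; rewrite PS_tele MX0 subr0.
  have PSv : forall k, PS v k = MN k by move=> k; rewrite PS_tele MN0 subr0.
  have cr : forall i, (i < n)%N -> _ := fun i hi =>
    cross (PS (fn p) i) (PS (fn q) i) (p0 i hi) (q0 i hi).
  have u0 : forall i, (i < n)%N -> 0 <= u i.
    by move=> i hi; rewrite /u /MX !PSS; case: (cr i hi).
  have v0 : forall i, (i < n)%N -> 0 <= v i.
    by move=> i hi; rewrite /v /MN !PSS; case: (cr i hi).
  apply: (@le_trans _ _ (\sum_(i < n) phi (v i) + \sum_(i < n) phi (u i))).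
    rewrite -!big_split /=; apply: ler_sum => i _.
    have hi := ltn_ord i.
    rewrite /u /v /MX /MN !PSS.
    case: (cr i hi) => e0 _ _ hab hba.
    case: (leP (fn p i) (fn q i)) => h.
      case: (hab h) => h1 h2 h3 h4.
      apply: (termC ht) => //; [exact: p0|lra].
    case: (hba (ltW h)) => h1 h2 h3 h4.
    rewrite [phi (fn p i) + _]addrC.
    apply: (termC ht) => //; [exact: q0|lra].
  apply: lerD.
  - apply: (schur ht rs r0 v0 r1).
    + by rewrite PSv /MN p1 q1 /mnr lexx.
    + move=> k hk; rewrite PSv /MN /mnr.
      by case: (leP (PS (fn p) k) (PS (fn q) k)) => _; [exact: hrp|exact: hrq].
    + move=> k hk; rewrite PSv /MN /mnr.
      by case: (leP (PS (fn p) k) (PS (fn q) k)) => _; [apply: (PS_le1 pp)|apply: (PS_le1 pq)].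
  - apply: (joinl ht ws w0 u0 w1).
    + by rewrite PSu /MX p1 q1 /mxr lexx.
    + move=> k hk; rewrite PSu /MX /mxr.
      by case: (leP (PS (fn p) k) (PS (fn q) k)) => _; [exact: hqw|exact: hpw].
    + move=> k hk; rewrite PSu; exact: touching pw mpw mqw wmin k hk.
- exact: (schur ht rs r0 p0 r1 p1 hrp (PS_le1 pp)).
- exact: (schur ht rs r0 q0 r1 q1 hrq (PS_le1 pq)).
- exact: (schur ht ps p0 w0 p1 w1 hpw (PS_le1 pw)).
- exact: (schur ht qs q0 w0 q1 w1 hqw (PS_le1 pw)).
Qed.

End Inner.


Section Outer.
Variable R : realType.

Lemma out_inc (D : R -> Prop) (h g : R -> R) a b x y :
  (forall s t, D s -> D t -> h s + g s * (t - s) <= h t) ->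
  (forall s, D s -> 0 <= g s) -> D a -> D b -> D x -> D y ->
  b <= x -> x <= a -> b <= y -> y <= a -> x + y <= a + b ->
  h x + h y <= h a + h b.
Proof.
move=> ht g0 Da Db.
wlog xy : x y / x <= y.
  move=> W Dx Dy h1 h2 h3 h4 h5; case: (leP x y) => hxy; first by apply: W.
  rewrite addrC; apply: W => //; [exact: ltW|lra].
move=> Dx Dy h1 h2 h3 h4 h5.
have t1 := ht y a Dy Da; have t2 := ht x b Dx Db.
have gm : 0 <= (g y - g x) * (x - b).
  have := xy; rewrite le_eqVlt => /orP[/eqP ->|lt]; first by rewrite subrr mul0r.
  apply: mulr_ge0; last lra.
  have t3 := ht x y Dx Dy; have t4 := ht y x Dy Dx.
  have : 0 <= (g y - g x) * (y - x) by lra.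
  rewrite pmulr_lge0; lra.
have : 0 <= g y * ((a + b) - (x + y)) by apply: mulr_ge0; [exact: g0|lra].
lra.
Qed.

Lemma out_dec (D : R -> Prop) (h g : R -> R) a b x y :
  (forall s t, D s -> D t -> h s + g s * (t - s) <= h t) ->
  (forall s, D s -> g s <= 0) -> D a -> D b -> D x -> D y ->
  a <= x -> x <= b -> a <= y -> y <= b -> a + b <= x + y ->
  h x + h y <= h a + h b.
Proof.
move=> ht g0 Da Db Dx Dy h1 h2 h3 h4 h5.
have := @out_inc (fun t => D (- t)) (fun t => h (- t)) (fun t => - g (- t))
  (- a) (- b) (- x) (- y).
rewrite !opprK; apply => //.
- move=> s t Ds Dt; have := ht _ _ Ds Dt; lra.
- by move=> s Ds; rewrite oppr_ge0; apply: g0.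
- lra.
- lra.
- lra.
- lra.
- lra.
Qed.

Lemma tanP (be ga : R) : (be < 1 /\ (1 <= ga \/ ga <= 0)) \/ (1 < be /\ 0 <= ga /\ ga <= 1) ->
  forall s t, 0 < s -> 0 < t ->
  (s `^ ga - 1) / (1 - be) + ga * (s `^ ga / s) / (1 - be) * (t - s) <= (t `^ ga - 1) / (1 - be).
Proof.
move=> hb s t s0 t0; rewrite -subr_ge0.
case: hb => [[b1 hg]|[b1 [g0 g1]]].
- have := @pow_tan_ge R s t ga s0 t0 hg => H.
  have -> : (t `^ ga - 1) / (1 - be) - ((s `^ ga - 1) / (1 - be) + ga * (s `^ ga / s) / (1 - be) * (t - s))
    = (t `^ ga - (s `^ ga + ga * (s `^ ga / s) * (t - s))) / (1 - be).
    by field; apply/andP; split; apply/eqP => hh; lra.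
  apply: divr_ge0; lra.
- have := @pow_tan_le R s t ga s0 t0 g0 g1 => H.
  have -> : (t `^ ga - 1) / (1 - be) - ((s `^ ga - 1) / (1 - be) + ga * (s `^ ga / s) / (1 - be) * (t - s))
    = ((s `^ ga + ga * (s `^ ga / s) * (t - s)) - t `^ ga) / (be - 1).
    by field; rewrite !andbA; apply/andP; split; [apply/andP; split|]; apply/eqP => hh; lra.
  apply: divr_ge0; lra.
Qed.

End Outer.

Unset Implicit Arguments. Set Strict Implicit.

Lemma innerG (R : realType) n' (phi cc : R -> R) (G : ('I_n'.+1 -> R) -> R) p q r w :
  tangent phi cc -> (forall f, G f = \sum_(i < n'.+1) phi (f i)) ->
  prob_vec p -> prob_vec q -> is_meet p q r -> is_join p q w ->
  [/\ G p + G q <= G r + G w, G p <= G r, G q <= G r, G w <= G p & G w <= G q].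
Proof. move=> ht hG hp hq hm hj; rewrite !hG; exact: (inner ht hp hq hm hj). Qed.

Lemma powsum_gt0 (R : realType) n (a : R) (f : 'I_n -> R) : prob_vec f -> 0 < powsum a f.
Proof.
move=> [f0 [f1 _]]; rewrite lt_neqAle sumr_ge0 ?andbT; last by move=> i _; exact: powR_ge0.
apply/eqP => h.
have h0 := @psumr_eq0P _ _ xpredT (fun i => f i `^ a)
  (fun i _ => powR_ge0 _ _) (esym h).
have : \sum_(i < n) f i = 0.
  by apply: big1 => i _; apply: (@powR_eq0_eq0 _ _ a); exact: h0.
rewrite f1 => /eqP; rewrite oner_eq0.
done.
Qed.

Theorem theorem2 (R : realType) (n : nat) (alpha beta : R)
    (halpha : 0 < alpha) (hbeta : beta <= alpha)
    (p q r w : 'I_n -> R) :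
  prob_vec p -> prob_vec q -> is_meet p q r -> is_join p q w ->
  sharma_mittal alpha beta p + sharma_mittal alpha beta q <=
  sharma_mittal alpha beta r + sharma_mittal alpha beta w.
Proof.
case: n p q r w => [|n'] p q r w hp hq hm hj.
  have h := hp.2.1; rewrite big_ord0 in h; exfalso; move: h => /eqP.
  by rewrite eq_sym oner_eq0.
have hr : prob_vec r := hm.1.
have hw : prob_vec w := hj.1.
rewrite /sharma_mittal.
have [ha1|ha1] := eqVneq alpha 1.
  have [H1 H2 H3 H4 H5] := @innerG R n' _ _ (@shannon R n'.+1) p q r w (@tan_shannon R)
    (fun f => esym (sumrN _ _ _)) hp hq hm hj.
  have [hb1|hb1] := eqVneq beta 1; first exact: H1.
  have b1 : beta < 1 by rewrite lt_neqAle hb1 -ha1.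
  apply: (@out_inc R (fun _ => True) (fun t => (expR ((1 - beta) * t) - 1) / (1 - beta))
    (fun t => expR ((1 - beta) * t)) (shannon r) (shannon w) (shannon p) (shannon q)) => //.
  - move=> s t _ _; rewrite -subr_ge0.
    have := @expR_tan R ((1 - beta) * t) ((1 - beta) * s) => H.
    have -> : (expR ((1 - beta) * t) - 1) / (1 - beta) -
      ((expR ((1 - beta) * s) - 1) / (1 - beta) + expR ((1 - beta) * s) * (t - s)) =
      (expR ((1 - beta) * t) - expR ((1 - beta) * s) * (1 + ((1 - beta) * t - (1 - beta) * s)))
        / (1 - beta).
      by field; apply/eqP => hh; lra.
    apply: divr_ge0; lra.
  - by move=> s _; exact: expR_ge0.
have Pp := @powsum_gt0 R _ alpha _ hp; have Pq := @powsum_gt0 R _ alpha _ hq.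
have Pr := @powsum_gt0 R _ alpha _ hr; have Pw := @powsum_gt0 R _ alpha _ hw.
set ga := (1 - beta) / (1 - alpha).
have [ha|ha] : alpha < 1 \/ 1 < alpha by move: ha1; rewrite neq_lt => /orP.
- have hb1 : (beta == 1) = false by apply/eqP => hh; lra.
  rewrite hb1.
  have [H1 H2 H3 H4 H5] := @innerG R n' _ _ (powsum alpha) p q r w (@tan_powlt R alpha halpha (ltW ha))
    (fun f => erefl) hp hq hm hj.
  have g1 : 1 <= ga by rewrite /ga ler_pdivlMr ?mul1r; lra.
  apply: (@out_inc R (fun t => 0 < t) (fun t => (t `^ ga - 1) / (1 - beta))
    (fun t => ga * (t `^ ga / t) / (1 - beta))
    (powsum alpha r) (powsum alpha w) (powsum alpha p) (powsum alpha q)) => //.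
  - move=> s t s0 t0; apply: tanP => //; left; split; [lra|by left].
  - move=> s s0; apply: divr_ge0; last lra.
    apply: mulr_ge0; first lra.
    by apply: divr_ge0; [exact: powR_ge0|exact: ltW].
- have [H1 H2 H3 H4 H5] := @innerG R n' _ _ (fun f => - powsum alpha f) p q r w
    (@tan_powgt R alpha (ltW ha)) (fun f => esym (sumrN _ _ _)) hp hq hm hj.
  have [hb1|hb1] := eqVneq beta 1.
    apply: (@out_dec R (fun t => 0 < t) (fun t => ln t / (1 - alpha))
      (fun t => t^-1 / (1 - alpha))
      (powsum alpha r) (powsum alpha w) (powsum alpha p) (powsum alpha q)) => //; try lra.
    + move=> s t s0 t0; rewrite -subr_ge0.
      have [ht _] := @pow_split R s t 1 s0 t0.
      have e := expR_ge1Dx (ln t - ln s).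
      have e2 : (t - s) / s = expR (ln t - ln s) - 1.
        by rewrite {1}ht; field; apply/eqP => hh; lra.
      have -> : ln t / (1 - alpha) - (ln s / (1 - alpha) + s^-1 / (1 - alpha) * (t - s)) =
        ((t - s) / s - (ln t - ln s)) / (alpha - 1).
        by field; repeat (apply/andP; split); apply/eqP => hh; lra.
      apply: divr_ge0; lra.
    + move=> s s0; apply: mulr_ge0_le0; first by rewrite invr_ge0; lra.
      by rewrite invr_le0; lra.
  have hbor : beta < 1 \/ 1 < beta by move: hb1; rewrite neq_lt => /orP.
  have hb' : 1 - beta != 0 by apply/eqP => hh; case: hbor => hb; lra.
  have gsgn : forall s, 0 < s -> ga * (s `^ ga / s) / (1 - beta) <= 0.
    move=> s s0.
    have -> : ga * (s `^ ga / s) / (1 - beta) = (s `^ ga / s) / (1 - alpha).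
      rewrite /ga; field; rewrite ?hb' ?andbT ?andTb //; repeat (apply/andP; split); apply/eqP => hh; lra.
    apply: mulr_ge0_le0; last by rewrite invr_le0; lra.
    by apply: divr_ge0; [exact: powR_ge0|exact: ltW].
  apply: (@out_dec R (fun t => 0 < t) (fun t => (t `^ ga - 1) / (1 - beta))
    (fun t => ga * (t `^ ga / t) / (1 - beta))
    (powsum alpha r) (powsum alpha w) (powsum alpha p) (powsum alpha q)) => //; try lra.
  move=> s t s0 t0; apply: tanP => //.
  case: hbor => hb.
  + left; split => //; right.
    rewrite /ga; apply: mulr_ge0_le0; first lra.
    by rewrite invr_le0; lra.
  + right; split => //.
    have -> : ga = (beta - 1) / (alpha - 1).
      by rewrite /ga; field; repeat (apply/andP; split); apply/eqP => hh; lra.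
    split; first by apply: divr_ge0; lra.
    by rewrite ler_pdivrMr ?mul1r; lra.
Qed.
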